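(* If $\mathcal{O}$ is a strongly decomposable set of upwards closed modalities, then $\mathcal{O}$ is decomposable.
   Context: $\Sigma$ is a signature of effect operations with arities $\alpha^n\to\alpha$, $\mathbf{N}\times\alpha^n\to\alpha$, $\alpha^{\mathbf{N}}\to\alpha$ or $\mathbf{N}\times\alpha^{\mathbf{N}}\to\alpha$. $TX$ is the set of possibly infinite labelled trees with leaves $\bot$ or elements of $X$ and internal nodes labelled by operations (or $\sigma_m$, $m\in\mathbb{N}$) with children according to arity; $t\le t'$ iff $t$ is obtained from $t'$ by replacing subtrees with $\bot$. $\mu:TTX\to TX$ replaces each leaf of a tree of trees by that tree. $\mathbf{1}=\{*\}$. A set $\mathcal{O}$ of modalities is given with $[\![o]\!]\subseteq T\mathbf{1}$; upwards closed means $[\![o]\!]$ is upward closed under $\le$. $t[\in P]\in T\mathbf{1}$ replaces leaves in $P$ by $*$ and other $X$-leaves by $\bot$; $o(A)=\{t\in TX\mid t[\in A]\in[\![o]\!]\}$. $\mathcal{T}$ is the least class of formulas containing $o(\top),o(\bot)$ ($o\in\mathcal{O}$) closed under arbitrary $\bigvee,\bigwedge$, with $[\![o(\top)]\!]=o(\{*\})$, $[\![o(\bot)]\!]=o(\emptyset)$, unions/intersections. $t\trianglelefteq t'$ iff $\forall\Phi\in\mathcal{T}$, $t\in[\![\Phi]\!]\Rightarrow t'\in[\![\Phi]\!]$; for $r,r'\in TT\mathbf{1}$, $r\preccurlyeq r'$ iff $\forall o\,\forall\Phi\in\mathcal{T}$, $r\in o([\![\Phi]\!])\Rightarrow r'\in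 o([\![\Phi]\!])$. $\mathcal{O}$ is decomposable if $r\preccurlyeq r'$ implies $\mu r\trianglelefteq\mu r'$. $\mathcal{O}$ is strongly decomposable if for every $r\in TT\mathbf{1}$ and $o\in\mathcal{O}$ with $\mu r\in o(\{*\})$ there is a collection $\{(o_i,o_i')\}_{i\in I}$ of pairs of modalities in $\mathcal{O}$ such that (1) $r\in o_i(o_i'(\{*\}))$ for all $i\in I$, and (2) for every $r'\in TT\mathbf{1}$, if $r'\in o_i(o_i'(\{*\}))$ for all $i\in I$ then $\mu r'\in o(\{*\})$. *)

(* Defs.v *)
From Stdlib Require Import ClassicalEpsilon.

Set Implicit Arguments.
Unset Strict Implicit.

(* A signature: operations, each with a flag saying whether it takes a natural
   number parameter (arities N x a^n -> a, N x a^N -> a), and an arity: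
   [Some n] = n children (a^n), [None] = countably many children (a^N). *)
Record signature := Signature {
  op :> Type;
  op_param : op -> bool;
  op_arity : op -> option nat
}.

Definition param_t (S : signature) (o : op S) : Type :=
  if @op_param S o then nat else unit.

Definition arity_t (S : signature) (o : op S) : Type :=
  match @op_arity S o with
  | Some n => { i : nat | i < n }
  | None => nat
  end.

CoInductive tree (S : signature) (X : Type) : Type :=
| Bot : tree S X
| Leaf : X -> tree S X
| Node : forall o : op S, param_t o -> (arity_t o -> tree S X) -> tree S X.

Arguments Bot {S X}.
Arguments Leaf {S X} _.
Arguments Node {S X} _ _ _.

CoInductive tle (S : signature) (X : Type) : tree S X -> tree S X -> Prop :=
| tle_bot : forall t, tle Bot t
| tle_leaf : forall x, tle (Leaf x) (Leaf x)
| tle_node : forall o m ch ch',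
    (forall i, tle (ch i) (ch' i)) -> tle (Node o m ch) (Node o m ch').

(* the unit set 1 = {*} is Rocq's [unit], * = tt *)

CoFixpoint mu (S : signature) (X : Type) (r : tree S (tree S X)) : tree S X :=
  match r with
  | Bot => Bot
  | Leaf t => t
  | Node o m ch => Node o m (fun i => mu (ch i))
  end.

CoFixpoint tsel (S : signature) (X : Type) (P : X -> Prop) (t : tree S X)
  : tree S unit :=
  match t with
  | Bot => Bot
  | Leaf x => if excluded_middle_informative (P x) then Leaf tt else Bot
  | Node o m ch => Node o m (fun i => tsel P (ch i))
  end.

(* Modalities: an index type [M] with an interpretation [sem o] subset of T 1.
   o(A) = { t in T X | t[in A] in [[o]] } *)
Definition omod (S : signature) (M : Type) (sem : M -> tree S unit -> Prop)
  (X : Type) (o : M) (A : X -> Prop) : tree S X -> Prop :=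
  fun t => sem o (tsel A t).

Definition upwards_closed (S : signature) (M : Type)
  (sem : M -> tree S unit -> Prop) : Prop :=
  forall o t t', tle t t' -> sem o t -> sem o t'.

Inductive formula (M : Type) : Type :=
| FTop : M -> formula M
| FBot : M -> formula M
| FOr : forall I : Type, (I -> formula M) -> formula M
| FAnd : forall I : Type, (I -> formula M) -> formula M.

Fixpoint fsem (S : signature) (M : Type) (sem : M -> tree S unit -> Prop)
  (F : formula M) : tree S unit -> Prop :=
  match F with
  | FTop o => omod sem o (fun _ : unit => True)
  | FBot o => omod sem o (fun _ : unit => False)
  | @FOr _ J f => fun t => exists i : J, fsem sem (f i) t
  | @FAnd _ J f => fun t => forall i : J, fsem sem (f i) t
  end.

Definition tri (S : signature) (M : Type) (sem : M -> tree S unit -> Prop)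
  (t t' : tree S unit) : Prop :=
  forall F : formula M, fsem sem F t -> fsem sem F t'.

Definition prec (S : signature) (M : Type) (sem : M -> tree S unit -> Prop)
  (r r' : tree S (tree S unit)) : Prop :=
  forall (o : M) (F : formula M),
    omod sem o (fsem sem F) r -> omod sem o (fsem sem F) r'.

Definition decomposable (S : signature) (M : Type)
  (sem : M -> tree S unit -> Prop) : Prop :=
  forall r r' : tree S (tree S unit),
    prec sem r r' -> tri sem (mu r) (mu r').

Definition strongly_decomposable (S : signature) (M : Type)
  (sem : M -> tree S unit -> Prop) : Prop :=
  forall (r : tree S (tree S unit)) (o : M),
    omod sem o (fun _ : unit => True) (mu r) ->
    exists (I : Type) (p : I -> M * M),
      (forall i : I,
         omod sem (fst (p i)) (omod sem (snd (p i)) (fun _ : unit => True)) r) /\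
      (forall r' : tree S (tree S unit),
         (forall i : I,
            omod sem (fst (p i)) (omod sem (snd (p i)) (fun _ : unit => True)) r') ->
         omod sem o (fun _ : unit => True) (mu r')).

(* Main.v *)
Require Import Defs.
From Stdlib Require Import ClassicalEpsilon.

Section Aux.
Set Implicit Arguments.
Variable S : signature.

CoFixpoint tmap (X Y : Type) (f : X -> Y) (t : tree S X) : tree S Y :=
  match t with
  | Bot => Bot
  | Leaf x => Leaf (f x)
  | Node o m ch => Node o m (fun i => tmap f (ch i))
  end.

CoInductive bisim (X : Type) : tree S X -> tree S X -> Prop :=
| bi_bot : bisim Bot Bot
| bi_leaf : forall x, bisim (Leaf x) (Leaf x)
| bi_node : forall o m ch ch',
    (forall i, bisim (ch i) (ch' i)) -> bisim (Node o m ch) (Node o m ch').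

Lemma frob (X : Type) (t : tree S X) : t =
  match t with Bot => Bot | Leaf x => Leaf x | Node o m ch => Node o m ch end.
Proof. destruct t; reflexivity. Qed.

Lemma bisim_refl (X : Type) : forall t : tree S X, bisim t t.
Proof. cofix CH. intros [|x|o m ch]; constructor. intro; apply CH. Qed.

Lemma bisim_sym (X : Type) : forall t t' : tree S X, bisim t t' -> bisim t' t.
Proof. cofix CH. intros t t' H; destruct H; constructor. intro; apply CH; auto. Qed.

Lemma bisim_tle (X : Type) : forall t t' : tree S X, bisim t t' -> tle t t'.
Proof. cofix CH. intros t t' H; destruct H; constructor. intro; apply CH; auto. Qed.

Lemma L1 (X : Type) (P Q : X -> Prop) : (forall x, P x -> Q x) ->
  forall t : tree S X, tle (tsel P t) (tsel Q t).
Proof.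
  intro HPQ. cofix CH. intro t.
  rewrite (frob (tsel P t)), (frob (tsel Q t)).
  destruct t as [|x|o m ch]; simpl.
  - constructor.
  - destruct (excluded_middle_informative (P x)) as [h|h];
    destruct (excluded_middle_informative (Q x)) as [h'|h']; try constructor.
    exfalso; auto.
  - constructor. intro; apply CH.
Qed.

Lemma L2 (X : Type) (P : X -> Prop) : forall r : tree S (tree S X),
  bisim (tsel P (mu r)) (mu (tmap (tsel P) r)).
Proof.
  cofix CH. intro r.
  rewrite (frob (tsel P (mu r))), (frob (mu (tmap (tsel P) r))).
  destruct r as [|t|o m ch]; simpl.
  - constructor.
  - apply bisim_refl.
  - constructor. intro; apply CH.
Qed.

Lemma L3 (X Y : Type) (P : Y -> Prop) (f : X -> Y) : forall r : tree S X,
  bisim (tsel P (tmap f r)) (tsel (fun x => P (f x)) r).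
Proof.
  cofix CH. intro r.
  rewrite (frob (tsel P (tmap f r))), (frob (tsel (fun x => P (f x)) r)).
  destruct r as [|t|o m ch]; simpl.
  - constructor.
  - apply bisim_refl.
  - constructor. intro; apply CH.
Qed.

Lemma L4 : forall t : tree S unit, bisim (tsel (fun _ => True) t) t.
Proof.
  cofix CH. intro t.
  rewrite (frob (tsel (fun _ => True) t)).
  destruct t as [|[]|o m ch]; simpl.
  - constructor.
  - destruct (excluded_middle_informative True) as [h|h]; [constructor|].
    exfalso; auto.
  - constructor. intro; apply CH.
Qed.

Variable M : Type.
Variable sem : M -> tree S unit -> Prop.
Hypothesis Hup : upwards_closed sem.

Lemma sem_bisim o t t' : bisim t t' -> sem o t -> sem o t'.
Proof. intros H; apply Hup, bisim_tle, H. Qed.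

Lemma Lconv (X Y : Type) (P : Y -> Prop) (Q : X -> Prop) (f : X -> Y) o r :
  (forall x, P (f x) -> Q x) -> sem o (tsel P (tmap f r)) -> sem o (tsel Q r).
Proof.
  intros HPQ H. eapply Hup; [apply L1; exact HPQ|].
  eapply sem_bisim; [apply L3|exact H].
Qed.

Lemma Lconv' (X Y : Type) (P : X -> Prop) (Q : Y -> Prop) (f : X -> Y) o r :
  (forall x, P x -> Q (f x)) -> sem o (tsel P r) -> sem o (tsel Q (tmap f r)).
Proof.
  intros HPQ H. eapply sem_bisim; [apply bisim_sym, L3|].
  eapply Hup; [apply (@L1 _ P (fun x => Q (f x))); exact HPQ|]. exact H.
Qed.

End Aux.

Theorem proposition4p19 (S : signature) (M : Type)
  (sem : M -> tree S unit -> Prop) :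
  upwards_closed sem -> strongly_decomposable sem -> decomposable sem.
Proof.
  intros Hup Hsd r r' Hp F.
  induction F as [o|o|J f IH|J f IH]; simpl.
  - intro H. destruct (Hsd r o H) as (I & p & H1 & H2).
    apply H2. intro i. apply (Hp (fst (p i)) (FTop (snd (p i)))). exact (H1 i).
  - unfold omod. intro H.
    pose (g := tsel (S := S) (fun _ : unit => False)).
    assert (H0 : omod sem o (fun _ : unit => True) (mu (tmap g r))).
    { unfold omod. eapply sem_bisim; [exact Hup| apply bisim_sym, L4 |].
      eapply sem_bisim; [exact Hup| apply L2 |exact H]. }
    destruct (Hsd _ o H0) as (I & p & H1 & H2).
    assert (H3 : omod sem o (fun _ : unit => True) (mu (tmap g r'))).
    { apply H2. intro i. unfold omod.
      apply (Lconv' Hup (fsem sem (FBot (snd (p i)))) _ g).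
      - intros t Ht. simpl in Ht |- *. unfold omod in Ht |- *.
        eapply sem_bisim; [exact Hup| apply bisim_sym, L4 | exact Ht].
      - apply (Hp (fst (p i)) (FBot (snd (p i)))).
        unfold omod. apply (Lconv Hup (fun t => omod sem (snd (p i)) (fun _ => True) t) _ g).
        + intros t Ht. simpl. unfold omod in Ht |- *.
          eapply sem_bisim; [exact Hup| apply L4 | exact Ht].
        + exact (H1 i). }
    unfold omod in H3. eapply sem_bisim; [exact Hup| apply bisim_sym, L2 |].
    eapply sem_bisim; [exact Hup| apply L4 |exact H3].
  - intros [i Hi]. exists i. apply IH, Hi.
  - intros Hi i. apply IH, Hi.
Qed.
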